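(* Let $\Gamma=(x_j,a_j)_{j=1}^k$ be a sequence of moves that is legal starting from $\eta$ and ends at $\eta'=\Gamma_k(\eta)$. For any set $X$ of susceptible sites, let $\Gamma^X$ be the sequence obtained from $\Gamma$ by ignoring every move that would cure (make healthy) a site in $X$. Then $\Gamma^X$ is also a legal sequence of moves starting from $\eta$, ending at $\eta''=\Gamma^X_k(\eta)$, and for all $j\le k$ the configurations $\Gamma_j(\eta)$ and $\Gamma^X_j(\eta)$ differ only on the set $X$.
   Context: Polluted FA2f setting on $\mathbb{Z}^d$: $\mathcal{S}\subseteq\mathbb{Z}^d$ is the set of susceptible sites, configurations are $\eta\in\{i,h\}^{\mathcal{S}}$ ($i$ infected, $h$ healthy). For $x\in\mathcal{S}$, $c_x(\eta)=1$ if $x$ has at least 2 nearest neighbours in $\mathcal{S}$ that are infected in $\eta$, else $0$. A move is a pair $(x,a)$ with $x\in\mathcal{S}$, $a\in\{i,h\}$; applying it to $\eta$ sets the state at $x$ to $a$; it is legal in $\eta$ if $c_x(\eta)=1$. For a sequence of moves $\Gamma=(x_j,a_j)_{j=1}^k$, $\Gamma_j(\eta)$ is the configuration obtained from $\eta$ by applying the first $j$ moves; $\Gamma$ is legal from $\eta$ if for each $j$ the move $(x_{j+1},a_{j+1})$ is legal in $\Gamma_j(\eta)$. *)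

(* Defs.v *)
From mathcomp Require Import all_boot all_order all_algebra.
Set Implicit Arguments. Unset Strict Implicit. Unset Printing Implicit Defensive.
Import GRing.Theory Num.Theory.

Definition site (d : nat) := {ffun 'I_d -> int}.

Definition nn (d : nat) (x y : site d) : bool :=
  (\sum_(i < d) absz (x i - y i))%N == 1%N.

Inductive state := inf | hea.

Definition state_eqb (a b : state) : bool :=
  match a, b with inf, inf | hea, hea => true | _, _ => false end.

(* susceptible sites are the elements of the subtype {x | S x} *)
Definition ssite (d : nat) (S : site d -> Prop) := {x : site d | S x}.

Definition config (d : nat) (S : site d -> Prop) := ssite S -> state.

Definition constraint d (S : site d -> Prop) (eta : config S) (x : ssite S) : Prop :=
  exists y1 y2 : ssite S, proj1_sig y1 <> proj1_sig y2 /\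
    nn (proj1_sig x) (proj1_sig y1) /\ nn (proj1_sig x) (proj1_sig y2) /\
    eta y1 = inf /\ eta y2 = inf.

Definition move d (S : site d -> Prop) := (ssite S * state)%type.

Definition apply_move d (S : site d -> Prop) (eta : config S) (m : move S) : config S :=
  fun y => if proj1_sig y == proj1_sig m.1 then m.2 else eta y.

Definition legal_move d (S : site d -> Prop) (eta : config S) (m : move S) : Prop :=
  constraint eta m.1.

Definition run d (S : site d -> Prop) (eta : config S) (G : seq (move S)) : config S :=
  foldl (@apply_move d S) eta G.

Definition Gamma_j d (S : site d -> Prop) (G : seq (move S)) (j : nat) (eta : config S) :=
  run eta (take j G).

(* legality of a sequence from eta: the (j+1)-th move is legal in Gamma_j(eta) *)
Definition legal_seq d (S : site d -> Prop) (eta : config S) (G : seq (move S)) : Prop :=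
  forall (j : nat) (m : move S), onth G j = Some m -> legal_move (Gamma_j G j eta) m.

Definition keep_move d (S : site d -> Prop) (X : pred (ssite S)) (m : move S) : bool :=
  ~~ (X m.1 && state_eqb m.2 hea).

Definition GammaX d (S : site d -> Prop) (X : pred (ssite S)) (G : seq (move S)) :=
  filter (keep_move X) G.

Definition GammaX_j d (S : site d -> Prop) (X : pred (ssite S)) (G : seq (move S))
  (j : nat) (eta : config S) : config S :=
  run eta (GammaX X (take j G)).

(* Main.v *)
Require Import Defs.
From mathcomp Require Import all_boot all_order all_algebra.
From Stdlib Require Import ProofIrrelevance.
Set Implicit Arguments. Unset Strict Implicit. Unset Printing Implicit Defensive.

Fixpoint legal_rec d (S : site d -> Prop) (eta : config S) (G : seq (move S)) : Prop :=
  match G with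
  | [::] => True
  | m :: G' => legal_move eta m /\ @legal_rec d S (apply_move eta m) G'
  end.

Lemma legal_recP d (S : site d -> Prop) (G : seq (move S)) (eta : config S) :
  legal_seq eta G <-> legal_rec eta G.
Proof.
elim: G eta => [|m G IH] eta /=.
  by split=> // _ j m; case: j.
split.
  move=> H; split; first by apply: (H 0%N).
  apply/IH => j m' Hj; exact: (H j.+1 m' Hj).
move=> [Hm HG] [|j] m' /=; first by case=> <-.
move=> Hj; move/IH: HG => HG; exact: HG j m' Hj.
Qed.

Definition Rel d (S : site d -> Prop) (X : pred (ssite S)) (e1 e2 : config S) :=
  forall y, e1 y = e2 y \/ (X y /\ e2 y = inf).

Lemma ssite_eq d (S : site d -> Prop) (x y : ssite S) : proj1_sig x = proj1_sig y -> x = y.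
Proof.
case: x => x px; case: y => y py /= E; subst y.
by rewrite (proof_irrelevance _ px py).
Qed.

Lemma Rel_step d (S : site d -> Prop) (X : pred (ssite S)) (e1 e2 : config S) m :
  Rel X e1 e2 ->
  Rel X (apply_move e1 m) (if keep_move X m then apply_move e2 m else e2).
Proof.
move=> R y; rewrite /apply_move /keep_move.
case: m => x a /=.
case Hk: (X x && state_eqb a hea) => /=.
  case: eqP => E; last by apply: R.
  move/andP: Hk => [Xx Ha].
  have -> : y = x by apply: ssite_eq.
  have -> : a = hea by case: a Ha.
  case: (e2 x) (R x) => [|]; [by right | by left].
by case: eqP => E; [left | apply: R].
Qed.

Lemma Rel_constraint d (S : site d -> Prop) (X : pred (ssite S)) (e1 e2 : config S) x :
  Rel X e1 e2 -> constraint e1 x -> constraint e2 x.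
Proof.
move=> R [y1 [y2 [H1 [H2 [H3 [H4 H5]]]]]].
exists y1, y2; do 4! split => //.
  by case: (R y1) => [<-|[]].
by case: (R y2) => [<-|[]].
Qed.

Lemma main d (S : site d -> Prop) (X : pred (ssite S)) (G : seq (move S)) :
  forall e1 e2 : config S, Rel X e1 e2 -> legal_rec e1 G ->
  legal_rec e2 (GammaX X G) /\
  forall j, Rel X (run e1 (take j G)) (run e2 (GammaX X (take j G))).
Proof.
rewrite /GammaX.
elim: G => [|m G IH] e1 e2 R /=.
  by move=> _; split => // j.
move=> [Hm HG].
have R' := Rel_step m R.
have [IH1 IH2] := IH _ _ R' HG.
split.
  case Hk: (keep_move X m) in R' IH1 IH2 * => /=; last by [].
  split => //; exact: (Rel_constraint R Hm).
case=> [|j] /=; first by [].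
have := IH2 j.
by case Hk: (keep_move X m) => /=.
Qed.

Theorem lemma3 (d : nat) (S : site d -> Prop) (eta : config S)
    (G : seq (move S)) (X : pred (ssite S)) :
  legal_seq eta G ->
  legal_seq eta (GammaX X G) /\
  (forall j : nat, (j <= size G)%N ->
     forall x : ssite S, ~~ X x -> Gamma_j G j eta x = GammaX_j X G j eta x).
Proof.
move/legal_recP => H.
have R0 : Rel X eta eta by move=> y; left.
have [H1 H2] := main R0 H.
split; first by apply/legal_recP.
move=> j _ x Hx; rewrite /Gamma_j /GammaX_j.
case: (H2 j x) => // [[Xx _]].
by rewrite Xx in Hx.
Qed.
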